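(* For every flag complex $\Delta$ there exists a vertex-decomposable flag complex $\Gamma$ whose $h$-vector, with trailing zeros removed, equals the face vector of $\Delta$.
   Context: A flag complex is a simplicial complex all of whose minimal non-faces have two elements, equivalently the independence complex of a graph. Face vector: $(f_{-1},\ldots,f_{d-1})$, $f_i$ = number of faces with $i+1$ elements, for a $(d-1)$-dimensional complex; $h$-vector: $(h_0,\ldots,h_d)$ with $h_j=\sum_{i=0}^{j}(-1)^{j-i}\binom{d-i}{j-i}f_{i-1}$. A pure complex $\Delta$ is vertex-decomposable if it is a simplex or has a vertex $v$ with $\mathrm{link}_\Delta v=\{\tau\in\Delta: v\notin\tau,\ \tau\cup\{v\}\in\Delta\}$ and $\mathrm{del}_\Delta v=\{\tau\in\Delta: v\notin\tau\}$ both pure and vertex-decomposable. *)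

(* Defs.v *)
From HB Require Import structures.
From mathcomp Require Import all_boot all_order all_algebra.
Set Implicit Arguments. Unset Strict Implicit. Unset Printing Implicit Defensive.
Import GRing.Theory Num.Theory.

Section Complexes.
Variable T : finType.
Implicit Types (D : {set {set T}}) (A B F G : {set T}) (v : T).

Definition simplicial_complex D : Prop :=
  set0 \in D /\ forall A B, B \in D -> A \subset B -> A \in D.

(* flag: every minimal non-face has two elements, i.e. every vertex set
   all of whose (at most) 2-element subsets are faces is a face *)
Definition flag_complex D : Prop :=
  simplicial_complex D /\
  forall A, (forall x y, x \in A -> y \in A -> [set x; y] \in D) -> A \in D.

Definition facet D F : Prop := F \in D /\ forall G, G \in D -> F \subset G -> G = F.

Definition pure D : Prop :=
  forall F G, facet D F -> facet D G -> #|F| = #|G|.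

Definition link D v : {set {set T}} :=
  [set tau in D | (v \notin tau) && (v |: tau \in D)].

Definition del D v : {set {set T}} := [set tau in D | v \notin tau].

Inductive vertex_decomposable : {set {set T}} -> Prop :=
| vd_simplex S : vertex_decomposable (powerset S)
| vd_step D v : pure D -> [set v] \in D ->
    pure (link D v) -> pure (del D v) ->
    vertex_decomposable (link D v) -> vertex_decomposable (del D v) ->
    vertex_decomposable D.

(* d = maximal face cardinality, so D is (d-1)-dimensional *)
Definition cdim D : nat := \max_(F in D) #|F|.

(* number of faces with k elements, i.e. f_{k-1} *)
Definition fcount D (k : nat) : nat := #|[set F in D | #|F| == k]|.

(* face vector (f_{-1}, ..., f_{d-1}) *)
Definition fvector D : seq nat := mkseq (fcount D) (cdim D).+1.

Definition hentry D (j : nat) : int :=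
  \sum_(i < j.+1) ((-1) ^+ (j - i) * ('C(cdim D - i, j - i) * fcount D i)%:Z)%R.

Definition hvector D : seq int := mkseq (hentry D) (cdim D).+1.

End Complexes.

Definition strip_trailing_zeros (s : seq int) : seq int :=
  foldr (fun x r => if (r == [::]) && (x == 0%R) then [::] else x :: r) [::] s.

(* Main.v *)
Require Import Defs.
From mathcomp Require Import all_boot all_order all_algebra.
From Stdlib Require Import Arith ArithRing Lia.
Set Implicit Arguments. Unset Strict Implicit. Unset Printing Implicit Defensive.
Import GRing.Theory Num.Theory.

Module P1.

Section W.
Variable T : finType.
Definition LL (F : {set (T + T)%type}) : {set T} := [set x | inl x \in F].
Definition RR (F : {set (T + T)%type}) : {set T} := [set x | inr x \in F].

Lemma card_LR (F : {set (T + T)%type}) : #|F| = #|LL F| + #|RR F|.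
Proof.
rewrite -sum1_card big_sumType /= -!sum1dep_card.
by congr (_ + _); apply: eq_card => x; rewrite !inE.
Qed.

Definition Gam (Dl : {set {set T}}) (S : {set T}) : {set {set (T + T)%type}} :=
  [set F | [&& LL F \in Dl, [disjoint LL F & RR F] & RR F \subset S]].

Lemma inGam Dl S (F : {set (T+T)%type}) : (F \in Gam Dl S) = [&& LL F \in Dl, [disjoint LL F & RR F] & RR F \subset S].
Proof. by rewrite inE. Qed.


Lemma disjU1 (x : T) (A B : {set T}) :
  [disjoint x |: A & B] = (x \notin B) && [disjoint A & B].
Proof. by rewrite -disjointU1; apply: eq_disjoint => y; rewrite !inE. Qed.

Lemma LL_U1l v (F : {set (T + T)%type}) : LL (inl v |: F) = v |: LL F.
Proof. by apply/setP => x; rewrite !inE. Qed.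
Lemma RR_U1l v (F : {set (T + T)%type}) : RR (inl v |: F) = RR F.
Proof. by apply/setP => x; rewrite !inE. Qed.
Lemma LL_U1r v (F : {set (T + T)%type}) : LL (inr v |: F) = LL F.
Proof. by apply/setP => x; rewrite !inE. Qed.
Lemma RR_U1r v (F : {set (T + T)%type}) : RR (inr v |: F) = v |: RR F.
Proof. by apply/setP => x; rewrite !inE. Qed.

Lemma link_Gam Dl S v : link (Gam Dl S) (inl v) = Gam (link Dl v) (S :\ v).
Proof.
apply/setP => F; rewrite !inE LL_U1l RR_U1l disjU1 subsetD1.
have -> : (inl v \in F) = (v \in LL F) by rewrite inE.
case: (LL F \in Dl); case: (v \in LL F); case: (v \in RR F);
  case: [disjoint LL F & RR F]; case: (RR F \subset S); case: (v |: LL F \in Dl); reflexivity.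
Qed.

Lemma del_Gam Dl S v : del (Gam Dl S) (inl v) = Gam (del Dl v) S.
Proof.
apply/setP => F; rewrite !inE.
have -> : (inl v \in F) = (v \in LL F) by rewrite inE.
by case: (LL F \in Dl); case: (v \in LL F); rewrite /= ?andbF ?andbT.
Qed.

Definition inv (Dl : {set {set T}}) (S : {set T}) := forall A, A \in Dl -> A \subset S.

Lemma pure_Gam Dl S : inv Dl S -> pure (Gam Dl S).
Proof.
move=> hI.
suff H : forall F, facet (Gam Dl S) F -> #|F| = #|S|.
  by move=> F G /H -> /H ->.
move=> F [FG Fmax]; move: (FG); rewrite inGam => /and3P [LD dis RS].
have eqS : LL F :|: RR F = S.
  apply/eqP; rewrite eqEsubset subUset (hI _ LD) RS /=.
  apply/subsetP => s sS; rewrite inE; apply/negPn/negP; rewrite negb_or => /andP [nL nR].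
  have h1 : inr s |: F \in Gam Dl S.
    by rewrite inGam LL_U1r RR_U1r LD disjoint_sym disjU1 nL disjoint_sym dis /= subUset sub1set sS RS.
  have := Fmax _ h1 (subsetU1 _ _) => eF.
  move: nR; rewrite inE -eF !inE eqxx //.
rewrite card_LR -eqS -cardsUI.
by move: dis; rewrite -setI_eq0 => /eqP ->; rewrite cards0 addn0.
Qed.

Definition nverts (Dl : {set {set T}}) := #|[set x | [set x] \in Dl]|.

Lemma vd_base Dl (S : {set T}) : simplicial_complex Dl -> (forall v, [set v] \notin Dl) ->
  vertex_decomposable (Gam Dl S).
Proof.
move=> [D0 Dc] nov.
have -> : Gam Dl S = powerset [set inr x | x in S].
  apply/setP => F; rewrite powersetE inGam.
  have LE : (LL F \in Dl) = (LL F == set0).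
    apply/idP/idP => [LD|/eqP ->//].
    apply/eqP/setP => x; rewrite !inE; apply/negbTE/negP => xL.
    by move: (nov x); rewrite (Dc _ _ LD) // sub1set inE.
  rewrite LE; apply/idP/idP.
    case/and3P => /eqP L0 _ RS; apply/subsetP => [[x|x]] xF.
      by move: (in_set0 x); rewrite -L0 inE xF.
    by apply/imsetP; exists x => //; apply: (subsetP RS); rewrite inE.
  move=> FS; have L0 : LL F = set0.
    apply/setP => x; rewrite !inE; apply/negbTE/negP => xF.
    by case/imsetP: (subsetP FS _ xF).
  rewrite L0 eqxx /=; apply/andP; split; first by rewrite -setI_eq0 set0I.
  apply/subsetP => x; rewrite inE => xF.
  by case/imsetP: (subsetP FS _ xF) => y yS [->].
exact: vd_simplex.
Qed.

Lemma LL_set1l v : LL [set inl v] = [set v].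
Proof. by apply/setP => x; rewrite !inE. Qed.
Lemma RR_set1l v : RR [set inl v] = set0.
Proof. by apply/setP => x; rewrite !inE. Qed.

Lemma vd_Gam : forall n Dl (S : {set T}), nverts Dl + #|S| <= n -> simplicial_complex Dl -> inv Dl S ->
  vertex_decomposable (Gam Dl S).
Proof.
elim=> [|n IH] Dl S hn [D0 Dc] hI.
  apply: vd_base => // v; apply/negP => vD.
  move: hn; rewrite leqn0 addn_eq0 => /andP [/eqP hv _].
  by move: hv; rewrite /nverts => /eqP; rewrite cards_eq0 => /eqP/setP/(_ v); rewrite !inE vD.
have [/existsP [v vD]|nov] := boolP [exists v, [set v] \in Dl]; last first.
  apply: vd_base => // v; apply/negP => vD; case/negP: nov; by apply/existsP; exists v.
have vS : v \in S by rewrite -sub1set; apply: hI.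
apply: (@vd_step _ _ (inl v)); rewrite ?link_Gam ?del_Gam.
- exact: pure_Gam.
- by rewrite inGam LL_set1l RR_set1l vD /= disjoint_sym disjoints_subset !sub0set.
- apply: pure_Gam => A; rewrite !inE => /and3P [AD vA _].
  by rewrite subsetD1 hI.
- by apply: pure_Gam => A; rewrite !inE => /andP [AD _]; apply: hI.
- apply: IH.
    rewrite -ltnS (leq_trans _ hn) // (cardsD1 v S) vS /= addnCA add1n ltnS leq_add2r.
    apply: subset_leq_card; apply/subsetP => x; rewrite !inE => /andP [] //.
  + split; first by rewrite !inE D0 setU0 vD andbT.
    move=> A B; rewrite !inE => /and3P [BD vB vBD] AB.
    rewrite (Dc _ _ BD AB) (Dc _ _ vBD) ?setUS // andbT.
    by apply/negP => vA; case/negP: vB; apply: (subsetP AB).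
  + by move=> A; rewrite !inE => /and3P [AD vA _]; rewrite subsetD1 hI.
- apply: IH.
  + rewrite -ltnS (leq_trans _ hn) // ltn_add2r /nverts.
    rewrite (cardsD1 v [set x | [set x] \in Dl]) inE vD add1n ltnS.
    apply: subset_leq_card; apply/subsetP => x; rewrite !inE => /andP [xD vx].
    by rewrite xD andbT eq_sym.
  + split; first by rewrite !inE D0 andbT.
    move=> A B; rewrite !inE => /andP [BD vB] AB.
    rewrite (Dc _ _ BD AB) /=.
    by apply/negP => vA; case/negP: vB; apply: (subsetP AB).
  + by move=> A; rewrite !inE => /andP [AD _]; apply: hI.
Qed.


Definition hh (p : {set T} * {set T}) : {set (T + T)%type} :=
  [set x : (T + T)%type | match x with inl a => a \in p.1 | inr b => b \in p.2 end].

Lemma LL_hh p : LL (hh p) = p.1. Proof. by apply/setP => x; rewrite !inE. Qed.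
Lemma RR_hh p : RR (hh p) = p.2. Proof. by apply/setP => x; rewrite !inE. Qed.

Lemma hh_bij : bijective hh.
Proof.
exists (fun F => (LL F, RR F)).
  by case=> A B; rewrite LL_hh RR_hh.
by move=> F; apply/setP => [[x|x]]; rewrite !inE.
Qed.

Lemma fcount_G (D : {set {set T}}) k :
  fcount (Gam D setT) k = \sum_(A in D) (#|A| <= k) * 'C(#|T| - #|A|, k - #|A|).
Proof.
rewrite /fcount -sum1dep_card (reindex hh); last exact: onW_bij hh_bij.
transitivity (\sum_(p : {set T} * {set T} | (p.1 \in D) && ([disjoint p.1 & p.2] && (#|p.1| + #|p.2| == k))) 1).
  by apply: eq_bigl => p; rewrite inGam LL_hh RR_hh card_LR LL_hh RR_hh subsetT andbT andbA.
transitivity (\sum_(A in D) \sum_(B : {set T} | [disjoint A & B] && (#|A| + #|B| == k)) 1).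
  by rewrite pair_big_dep.
apply: eq_bigr => A AD.
have [Ak|kA] := leqP #|A| k.
  rewrite mul1n sum1dep_card -[#|T|](cardsC A) addKn -cards_draws.
  apply: eq_card => B; rewrite !inE disjoint_sym disjoints_subset.
  congr (_ && _); apply/eqP/eqP => [<-|->]; first by rewrite addKn.
  by rewrite subnKC.
rewrite mul0n big_pred0 // => B; apply/negP => /andP [_ /eqP e].
by move: kA; rewrite -e ltnNge leq_addr.
Qed.

Lemma cdim_G (D : {set {set T}}) : set0 \in D -> cdim (Gam D setT) = #|T|.
Proof.
move=> D0; apply/anti_leq/andP; split.
  apply/bigmax_leqP => F; rewrite inGam => /and3P [_ dis _].
  rewrite card_LR -cardsUI; move: dis; rewrite -setI_eq0 => /eqP ->.
  by rewrite cards0 addn0 max_card.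
have F0 : hh (set0, setT) \in Gam D setT.
  by rewrite inGam LL_hh RR_hh D0 /= subxx andbT -setI_eq0 set0I.
apply: leq_trans (leq_bigmax_cond _ F0).
by rewrite card_LR LL_hh RR_hh cards0 cardsT.
Qed.

End W.
End P1.
Import P1.

Module P2.

Lemma binM m l k : k <= l -> l <= m -> 'C(m - k, l - k) * 'C(m, k) = 'C(m, l) * 'C(l, k).
Proof.
move=> kl lm.
have km : k <= m := leq_trans kl lm.
have e1 := bin_fact (leq_sub2r k lm).
have hs : m - k - (l - k) = m - l.
  by move/leP: kl => kl'; move/leP: lm => lm'; rewrite -!minusE; lia.
rewrite hs in e1.
have e2 := bin_fact km; have e3 := bin_fact lm; have e4 := bin_fact kl.
apply/eqP; rewrite -(@eqn_pmul2r (k`! * ((l-k)`! * (m-l)`!))); last by rewrite !muln_gt0 !fact_gt0.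
apply/eqP; apply: (@etrans nat _ (m`!)).
  by rewrite -e2 -e1 -!multE; ring.
by rewrite -e3 -e4 -!multE; ring.
Qed.

Local Open Scope ring_scope.

Lemma alt_sum l : \sum_(k < l.+1) ((-1) ^+ (l - k) * ('C(l, k))%:Z) = (l == 0)%N%:Z :> int.
Proof.
have := exprDn (-1 : int) 1 l; rewrite addNr expr0n natz => ->.
apply: eq_bigr => i _; by rewrite expr1n mulr1 -natz mulr_natr.
Qed.

Lemma hid (n a j : nat) : (a <= n)%N -> (j <= n)%N ->
  \sum_(0 <= i < j.+1) ((-1) ^+ (j - i) * ('C(n - i, j - i) * ((a <= i) * 'C(n - a, i - a)))%N%:Z)
  = (a == j)%:Z :> int.
Proof.
move=> an jn.
have [ja|aj] := ltnP j a.
  rewrite big_nat_cond big1 ?gtn_eqF // => i /andP [/andP [_ ij] _].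
  have ia : (i < a)%N := leq_ltn_trans (ltnSE ij) ja.
  by rewrite leqNgt ia /= mul0n muln0 mulr0.
rewrite (@big_cat_nat _ _ _ a 0 j.+1 _ _ (leq0n a) (leqW aj)) /=.
rewrite big_nat_cond big1 ?add0r; last first.
  by move=> i /andP [/andP [_ ia] _]; rewrite leqNgt ia /= mul0n muln0 mulr0.
rewrite -{1}[a]add0n big_addn subSn // big_mkord.
transitivity (\sum_(k < (j - a).+1) ('C(n - a, j - a))%:Z * ((-1) ^+ ((j - a) - k) * ('C(j - a, k))%:Z)).
  apply: eq_bigr => k _.
  have kja : (k <= j - a)%N := ltnSE (ltn_ord k).
  rewrite leq_addl addnK mul1n (addnC k a) !subnDA binM // ?leq_sub2r //.
  by rewrite PoszM mulrCA.
rewrite -big_distrr /= alt_sum.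
case: (eqVneq a j) => [<-|ne]; first by rewrite subnn bin0 eqxx mulr1.
have -> : (j - a == 0)%N = false by rewrite subn_eq0 leqNgt ltn_neqAle ne aj.
by rewrite mulr0.
Qed.
End P2.
Import P2.

Local Open Scope ring_scope.

Lemma PoszS (I : Type) (r : seq I) (P : pred I) (F : I -> nat) :
  Posz (\sum_(i <- r | P i) F i)%N = \sum_(i <- r | P i) Posz (F i).
Proof. exact: (big_morph Posz PoszD). Qed.

Lemma hid_ord (n a j : nat) : (a <= n)%N -> (j <= n)%N ->
  \sum_(i < j.+1) ((-1) ^+ (j - i) * ('C(n - i, j - i) * ((a <= i) * 'C(n - a, i - a)))%N%:Z)
  = (a == j)%:Z :> int.
Proof. by move=> an jn; rewrite -(hid an jn) big_mkord. Qed.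

Lemma hentry_G (T : finType) (D : {set {set T}}) j : set0 \in D -> (j <= #|T|)%N ->
  hentry (Gam D setT) j = (fcount D j)%:Z.
Proof.
move=> D0 jn; rewrite /hentry cdim_G //.
under eq_bigr => i _ do rewrite fcount_G big_distrr PoszS big_distrr /=.
rewrite exchange_big /=.
under eq_bigr => A _ do rewrite hid_ord ?max_card //.
rewrite /fcount -sum1dep_card PoszS big_mkcondr /=.
by apply: eq_bigr => A _; case: (#|A| == j)%N.
Qed.

Lemma foldr_nseq0 k : foldr (fun x r => if (r == [::]) && (x == 0) then [::] else x :: r) [::] (nseq k (0:int)) = [::].
Proof. by elim: k => //= k ->; rewrite eqxx. Qed.

Lemma strip_cat0 s k : strip_trailing_zeros (s ++ nseq k 0) = strip_trailing_zeros s.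
Proof. by rewrite /strip_trailing_zeros foldr_cat foldr_nseq0. Qed.

Lemma foldr_ne (s r : seq int) : r != [::] ->
  foldr (fun x r => if (r == [::]) && (x == 0) then [::] else x :: r) r s = s ++ r.
Proof.
move=> hr; elim: s => //= y s ->.
by case: s; case: r hr.
Qed.

Lemma strip_last s (x : int) : x != 0 -> strip_trailing_zeros (rcons s x) = rcons s x.
Proof.
move=> hx; rewrite /strip_trailing_zeros -cats1 foldr_cat /= (negbTE hx).
by rewrite foldr_ne.
Qed.

Lemma map_const0 (s : seq nat) : map (fun _ => 0 : int) s = nseq (size s) 0.
Proof. by elim: s => //= ? ? ->. Qed.

Lemma flag_G (T : finType) (D : {set {set T}}) : flag_complex D -> flag_complex (Gam D setT).
Proof.
move=> [[D0 Dc] Df]; split; first split.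
- rewrite inGam subsetT andbT.
  have -> : LL (set0 : {set (T + T)%type}) = set0 by apply/setP => x; rewrite !inE.
  by rewrite D0 /= -setI_eq0 set0I.
- move=> A B; rewrite !inGam !subsetT !andbT => /andP [LB dis] AB.
  have hL : LL A \subset LL B by apply/subsetP => x; rewrite !inE => /(subsetP AB).
  have hR : RR A \subset RR B by apply/subsetP => x; rewrite !inE => /(subsetP AB).
  rewrite (Dc _ _ LB hL) /=.
  exact: (disjointWl hL (disjointWr hR dis)).
- move=> A hA; rewrite inGam subsetT andbT; apply/andP; split.
  apply: Df => x y; rewrite !inE => xA yA.
  have := hA _ _ xA yA; rewrite inGam => /andP [h _].
  suff <- : LL [set inl x; inl y] = [set x; y] by [].
  by apply/setP => z; rewrite !inE.
  rewrite -setI_eq0; apply/eqP/setP => x; rewrite !inE; apply/negbTE/negP => /andP [h1 h2].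
  have := hA _ _ h1 h2; rewrite inGam => /and3P [_ dis _].
  have e1 : LL [set inl x; inr x] = [set x] by apply/setP => z; rewrite !inE orbF.
  have e2 : RR [set inl x; inr x] = [set x] by apply/setP => z; rewrite !inE.
  by move: dis; rewrite e1 e2 disjoints1 inE eqxx.
Qed.

Theorem corollary3p7 (T : finType) (D : {set {set T}}) :
  flag_complex D ->
  exists (U : finType) (G : {set {set U}}),
    [/\ flag_complex G, vertex_decomposable G &
        strip_trailing_zeros (hvector G) = map Posz (fvector D)].
Proof.
move=> fD; have [[D0 Dc] _] := fD.
exists (T + T)%type, (Gam D setT); split.
- exact: flag_G.
- apply: (@vd_Gam T (nverts D + #|[set: T]|) D [set: T]) => //.
set c := cdim D; set n := #|T|.
have cn : (c <= n)%N by apply/bigmax_leqP => F _; apply: max_card.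
have hv : hvector (Gam D setT) = map Posz (fvector D) ++ nseq (n - c) 0.
  rewrite /hvector cdim_G // /mkseq /fvector /mkseq -/c -/n.
  rewrite -{1}(subnKC cn) -addSn iotaD map_cat add0n -map_comp.
  congr (_ ++ _).
    apply/eq_in_map => j; rewrite mem_iota add0n /= => jc.
    by rewrite hentry_G // (leq_trans (ltnSE jc) cn).
  have -> : nseq (n - c) (0:int) = map (fun _ => 0) (iota c.+1 (n - c)) by rewrite map_const0 size_iota.
  apply/eq_in_map => j; rewrite mem_iota => /andP [cj jn].
  rewrite hentry_G //; last first.
    by move: jn; rewrite addSn subnKC // ltnS.
  suff -> : fcount D j = 0%N by [].
  apply/eqP; rewrite cards_eq0; apply/eqP/setP => F; rewrite !inE.
  apply/negbTE/andP => [[FD /eqP FJ]].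
  have := @leq_bigmax_cond _ (fun F => F \in D) (fun F => #|F|) F FD.
  by rewrite -/(cdim D) -/c FJ leqNgt cj.
rewrite hv strip_cat0 /fvector mkseqS map_rcons strip_last //.
have D0' : (0 < #|D|)%N by rewrite card_gt0; apply/set0Pn; exists set0.
have [F FD eF] := @eq_bigmax_cond _ (fun F => F \in D) (fun F => #|F|) D0'.
rewrite eqz_nat -lt0n card_gt0; apply/set0Pn; exists F.
by rewrite !inE FD -eF /=; apply/eqP.
Qed.
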